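(* Suppose $\|\mu_a\|_\infty,\|\widehat\mu_a\|_\infty\le B<\infty$ a.s. for all $a$, and $\mathbb{P}$ satisfies the margin condition with some $\kappa>0$, $\alpha>0$. Let $C^*\in\mathcal{C}_k^*$ and $f_{C}(x)=\|x-\Pi_C(x)\|_2^2$. Then $$\big|\mathbb{P}\{f_{C^*}(\widehat\mu)-f_{C^*}(\mu)\}\big|\lesssim\max_a\|\widehat\mu_a-\mu_a\|_{\mathbb{P},1}+\max_a\|\widehat\mu_a-\mu_a\|_\infty^{\alpha+1}+\frac1\kappa\max_a\big(\|\widehat\mu_a-\mu_a\|_\infty\|\widehat\mu_a-\mu_a\|_{\mathbb{P},1}\big).$$
   Context: $Z=(Y,A,X)\sim\mathbb{P}$, $A\in\mathcal{A}=\{1,\dots,p\}$; $\mu_a(X)=\mathbb{E}(Y\mid X,A=a)$, $\mu=(\mu_1(X),\dots,\mu_p(X))^\top$, $\widehat\mu$ an estimator of $\mu$ held fixed under $\mathbb{P}$ (i.e. $\mathbb{P}\{g(\widehat\mu)\}=\int g(\widehat\mu(x))d\mathbb{P}$). Codebooks $C=\{c_1,\dots,c_k\}\subset\mathbb{R}^p$; $\mathcal{C}_k$ those of size $k$ in the image of $\mu$; $\Pi_C(x)=\arg\min_{c\in C}\|c-x\|_2^2$; $R(C)=\mathbb{E}\|\mu-\Pi_C(\mu)\|_2^2$; $\mathcal{C}_k^*$ its minimizers. $V_j(C^* )=\{x:\|x-c_j^*\|_2\le\|x-c_i^*\|_2\ \forall i\ne j\}$; $N_{C^*}(t)=\bigcup_j\{x\in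 V_j(C^* ):|\,\|x-c_j^*\|_2-\min_{i\ne j}\|x-c_i^*\|_2\,|\le t\}$; margin condition (radius $\kappa$, rate $\alpha$): for $0\le t\le\kappa$, $\sup_{C^*\in\mathcal{C}_k^*}\mathbb{P}(\mu\in N_{C^*}(t))\lesssim t^\alpha$. $\|f\|_{\mathbb{P},1}=\int|f|d\mathbb{P}$, $\|\cdot\|_\infty$ sup norm; $\lesssim$ inequality up to a multiplicative constant. *)

(* Defs.v *)
From HB Require Import structures.
From mathcomp Require Import all_boot all_order all_algebra.
From mathcomp Require Import all_classical all_reals all_analysis ess_sup_inf.
Set Implicit Arguments. Unset Strict Implicit. Unset Printing Implicit Defensive.
Import Order.TTheory GRing.Theory Num.Theory.
Import numFieldNormedType.Exports.
Local Open Scope classical_set_scope.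
Local Open Scope ring_scope.

Section Defs.
Context {R : realType} {p k : nat}.

Definition vecf {T : Type} (m : 'I_p -> T -> R) (x : T) : 'rV[R]_p :=
  \row_(a < p) m a x.

Definition dist2 (x c : 'rV[R]_p) : R := \sum_(i < p) (x 0 i - c 0 i) ^+ 2.
Definition dist (x c : 'rV[R]_p) : R := Num.sqrt (dist2 x c).

Definition codebook := 'I_k -> 'rV[R]_p.

(* f_C(x) = ||x - Pi_C(x)||_2^2 = min_{c in C} ||x - c||_2^2
   (independent of tie-breaking in the argmin); for k = 0 it is 0. *)
Definition fC (C : codebook) (x : 'rV[R]_p) : R :=
  fine (\big[mine/+oo%E]_(j < k) (dist2 x (C j))%:E).

Context {d : measure_display} {T : measurableType d} (P : probability T R).

Definition in_Ck (mu : 'I_p -> T -> R) (C : codebook) : Prop :=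
  injective C /\ forall j, exists x, C j = vecf mu x.

Definition risk (mu : 'I_p -> T -> R) (C : codebook) : \bar R :=
  (\int[P]_x (fC C (vecf mu x))%:E)%E.

Definition optimal (mu : 'I_p -> T -> R) (C : codebook) : Prop :=
  in_Ck mu C /\ forall C', in_Ck mu C' -> (risk mu C <= risk mu C')%E.

Definition voronoi (C : codebook) (j : 'I_k) : set 'rV[R]_p :=
  [set x | forall i, i != j -> dist x (C j) <= dist x (C i)].

Definition margin_set (C : codebook) (t : R) : set 'rV[R]_p :=
  [set x | exists j, voronoi C j x /\
     (`| (dist x (C j))%:E - \big[mine/+oo%E]_(i < k | i != j) (dist x (C i))%:E |
       <= t%:E)%E].

(* margin condition with radius kappa, rate alpha, and constant cm
   (the constant hidden in \lesssim) *)
Definition margin_condition (mu : 'I_p -> T -> R) (kappa alpha cm : R) : Prop :=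
  forall t, 0 <= t <= kappa -> forall C, optimal mu C ->
    (P [set x | margin_set C t (vecf mu x)] <= (cm * t `^ alpha)%:E)%E.

Definition L1norm (f : T -> R) : \bar R := (\int[P]_x `|f x|%:E)%E.
Definition Linfnorm (f : T -> R) : \bar R := ess_sup P (fun x => `|f x|%:E).

End Defs.

(* Main.v *)
Require Import Defs.
From HB Require Import structures.
From mathcomp Require Import all_boot all_order all_algebra.
From mathcomp Require Import all_classical all_reals all_analysis.
From mathcomp Require Import measurable_realfun.
From mathcomp Require Import ring lra.
Import Order.TTheory GRing.Theory Num.Theory.
Import numFieldNormedType.Exports.
Local Open Scope classical_set_scope.
Local Open Scope ring_scope.


Section H.
Context {R : realType} {p k : nat}.

Lemma dist2_ge0 (x c : 'rV[R]_p) : 0 <= dist2 x c.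
Proof. by rewrite /dist2 sumr_ge0// => i _; rewrite sqr_ge0. Qed.

Lemma fC_eq (C : @codebook R p k) z (j0 : 'I_k) :
  exists i0, fC C z = dist2 z (C i0).
Proof.
rewrite /fC.
have [i0 _ ->] := @eq_bigmin _ _ _ (+oo%E) j0 xpredT (fun j => (dist2 z (C j))%:E) isT
   (fun _ _ => leey _).
by exists i0.
Qed.

Lemma fC_le (C : @codebook R p k) z j : fC C z <= dist2 z (C j).
Proof.
have [i0 Hi] := fC_eq C z j.
rewrite Hi -lee_fin.
have [i1 _ H1] := @eq_bigmin _ _ _ (+oo%E) j xpredT (fun j => (dist2 z (C j))%:E) isT
   (fun _ _ => leey _).
have : fC C z = dist2 z (C i1) by rewrite /fC H1.
rewrite Hi => ->; rewrite -H1.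
exact: bigmin_le.
Qed.

Context {d : measure_display} {T : measurableType d}.

Lemma mdist2 (m : 'I_p -> T -> R) c : (forall a, measurable_fun setT (m a)) ->
  measurable_fun setT (fun x => dist2 (vecf m x) c).
Proof.
move=> mm; rewrite /dist2.
have -> : (fun x => \sum_(i < p) (vecf m x 0 i - c 0 i) ^+ 2)
   = (fun x => \sum_(i < p) (m i x - c 0 i) ^+ 2).
  by apply/funext => x; apply: eq_bigr => i _; rewrite mxE.
apply: measurable_sum => i.
apply: measurable_funX; apply: measurable_funB => //; exact: measurable_cst.
Qed.

Lemma mfC (m : 'I_p -> T -> R) (C : @codebook R p k) :
  (forall a, measurable_fun setT (m a)) ->
  measurable_fun setT (fun x => fC C (vecf m x)).
Proof.
move=> mm; rewrite /fC.
apply: (measurableT_comp (fine_measurable _)) => //.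
have H : forall s : seq 'I_k, measurable_fun setT
   (fun x => \big[mine/+oo%E]_(j <- s) (dist2 (vecf m x) (C j))%:E).
  elim => [|j s IH].
    under eq_fun do rewrite big_nil; exact: measurable_cst.
  under eq_fun do rewrite big_cons.
  apply: measurable_mine => //.
  by apply/measurable_EFinP; apply: mdist2.
exact: (H (index_enum _)).
Qed.

End H.

Lemma fC_ge0 (R : realType) (p k : nat) (C : @codebook R p k) z : 0 <= fC C z.
Proof.
case: k C => [|k'] C.
  by rewrite /fC big_ord0.
by have [i0 ->] := fC_eq C z ord0; apply: dist2_ge0.
Qed.


Lemma term_le_dist2 (R : realType) p (x c : 'rV[R]_p) i :
  (x 0 i - c 0 i) ^+ 2 <= dist2 x c.
Proof.
rewrite /dist2 (bigD1 i) //= lerDl; apply: sumr_ge0 => j _; exact: sqr_ge0.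
Qed.

Lemma fC_diff (R : realType) p k (C : @codebook R p k) (j0 : 'I_k) (x y : 'rV[R]_p) (B' D : R) :
  (forall i, `|x 0 i| <= B') -> (forall i, `|y 0 i| <= B') -> fC C x <= D ->
  fC C y - fC C x <= (2 * B' + 2 + 2 * D) * \sum_(i < p) `|y 0 i - x 0 i|.
Proof.
move=> hx hy hD.
have [j Hj] := fC_eq C x j0.
apply: (@le_trans _ _ (dist2 y (C j) - dist2 x (C j))).
  by rewrite Hj lerD2r fC_le.
rewrite /dist2 -sumrB mulr_sumr; apply: ler_sum => i _.
have h1 : (x 0 i - C j 0 i) ^+ 2 <= D.
  have := @term_le_dist2 _ _ x (C j) i; rewrite -Hj => h; exact: le_trans h hD.
set a := y 0 i - x 0 i; set b := x 0 i - C j 0 i.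
have -> : y 0 i - C j 0 i = a + b by rewrite /a /b; ring.
have hb : `|b| <= 1 + D.
  have : `|b| ^+ 2 <= D by rewrite real_normK ?num_real.
  have := normr_ge0 b; move: (`|b|) => t t0 ht; nra.
have hab : `|a + 2 * b| <= 2 * B' + 2 + 2 * D.
  have ha : `|a| <= 2 * B'.
    rewrite /a; apply: le_trans (ler_normB _ _) _.
    have := hx i; have := hy i; lra.
  apply: le_trans (ler_normD _ _) _.
  rewrite normrM (ger0_norm (_ : 0 <= 2 :> R)) //.
  lra.
have -> : (a + b) ^+ 2 - b ^+ 2 = a * (a + 2 * b) by ring.
apply: le_trans (ler_norm _) _; rewrite normrM mulrC.
by apply: ler_wpM2r => //.
Qed.


Lemma sq_le (R : realType) (u M : R) : `|u| <= M -> u ^+ 2 <= M ^+ 2.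
Proof.
move=> h; rewrite -real_normK ?num_real//; have := normr_ge0 u; move: (`|u|) h => t; nra.
Qed.

Lemma ae_ex d (T : measurableType d) (R : realType) (P : probability T R) (Q : T -> Prop) :
  {ae P, forall x, Q x} -> exists x, Q x.
Proof.
move=> [N [mN PN sub]].
apply: contrapT => hn.
have : P setT = 0%E.
  apply/eqP; rewrite eq_le measure_ge0 andbT -PN; apply: le_measure => //; rewrite ?inE //.
  by move=> x _; apply: sub => /= hq; apply: hn; exists x.
by rewrite probability_setT => /eqP; rewrite eqe oner_eq0.
Qed.

Lemma dist2_box (R : realType) p (z c : 'rV[R]_p) (M : R) :
  (forall i, `|z 0 i - c 0 i| <= M) -> dist2 z c <= p%:R * M ^+ 2.
Proof.
move=> h; rewrite /dist2.
apply: le_trans (_ : \sum_(i < p) M ^+ 2 <= _).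
  by apply: ler_sum => i _; apply: sq_le.
by rewrite sumr_const card_ord mulr_natl.
Qed.

Lemma center_bound (R : realType) p k d (T : measurableType d) (P : probability T R)
  (mu : 'I_p -> T -> R) (Cs : @codebook R p k) (j0 : 'I_k) (B : R) :
  (forall a, measurable_fun setT (mu a)) ->
  {ae P, forall x, forall a, `|mu a x| <= B} -> optimal P mu Cs ->
  exists j, forall i, `|Cs j 0 i| <= `|B| + 1 + (p%:R * (`|B| + `|B|) ^+ 2 + 1).
Proof.
move=> mmu hB [[injC imC] opt].
set E0 := p%:R * (`|B| + `|B|) ^+ 2 + 1.
have [x0 hx0] := @ae_ex _ _ _ P _ hB.
set c0 := vecf mu x0.
have hc0 : forall i, `|c0 0 i| <= `|B|.
  by move=> i; rewrite mxE; apply: le_trans (hx0 i) (ler_norm _).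
case: (pselect (exists j, Cs j = c0)) => [[j hj]|hno].
  exists j => i; rewrite hj; apply: le_trans (hc0 i) _.
  have : 0 <= E0 by rewrite /E0 addr_ge0 // mulr_ge0 // sqr_ge0.
  lra.
pose C' : @codebook R p k := fun j => if j == j0 then c0 else Cs j.
have inC' : in_Ck mu C'.
  split.
    move=> i j; rewrite /C'; case: eqP => [->|ni]; case: eqP => [->|nj] //.
    - by move=> h; exfalso; apply: hno; exists j.
    - by move=> h; exfalso; apply: hno; exists i.
    - exact: injC.
  move=> j; rewrite /C'; case: eqP => _; first by exists x0.
  exact: imC.
have hr := opt C' inC'.
have hrC' : (risk P mu C' <= (E0 - 1)%:E)%E.
  rewrite /risk.
  apply: le_trans (_ : (\int[P]_x (cst (E0 - 1)%:E x) <= _)%E).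
    apply: ae_ge0_le_integral => //.
    - by move=> x _; rewrite lee_fin fC_ge0.
    - by apply/measurable_EFinP; apply: mfC.
    - by move=> x _; rewrite lee_fin /E0 addrK mulr_ge0 // sqr_ge0.
    apply: filterS hB => x hx _.
    rewrite lee_fin /E0 addrK.
    apply: le_trans (fC_le C' _ j0) _.
    rewrite /C' eqxx; apply: dist2_box => i.
    rewrite mxE; apply: le_trans (ler_normB _ _) _.
    by apply: lerD; [apply: le_trans (hx i) (ler_norm _)|exact: hc0].
  rewrite integral_cst // ; rewrite (_ : (P : {measure set T -> \bar R}) setT = 1%E); last exact: probability_setT.
   by rewrite mule1.

have [x1 [hx1 hf1]] : exists x1, (forall a, `|mu a x1| <= B) /\ fC Cs (vecf mu x1) <= E0.
  apply: contrapT => hn.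
  have : (E0%:E <= risk P mu Cs)%E.
    rewrite /risk.
    apply: le_trans (_ : (\int[P]_x (cst E0%:E x) <= _)%E).
      rewrite integral_cst // ; rewrite (_ : (P : {measure set T -> \bar R}) setT = 1%E); last exact: probability_setT.
   by rewrite mule1.
    apply: ae_ge0_le_integral => //.
    - by move=> x _; rewrite lee_fin /E0 addr_ge0 // mulr_ge0 // sqr_ge0.
    - by move=> x _; rewrite lee_fin fC_ge0.
    - by apply/measurable_EFinP; apply: mfC.
    apply: filterS hB => x hx _.
    rewrite lee_fin /=; apply/ltW; rewrite ltNge; apply/negP => hle.
    by apply: hn; exists x.
  move=> h1; have := le_trans h1 (le_trans hr hrC'); rewrite lee_fin; lra.
have [j hj] := fC_eq Cs (vecf mu x1) j0.
exists j => i.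
have h1 := @term_le_dist2 _ _ (vecf mu x1) (Cs j) i.
rewrite -hj in h1; have h2 := le_trans h1 hf1.
set b := vecf mu x1 0 i - Cs j 0 i in h2.
have hb : `|b| <= 1 + E0.
  have : `|b| ^+ 2 <= E0 by rewrite real_normK ?num_real.
  have := normr_ge0 b; move: (`|b|) => t t0 ht; nra.
have -> : Cs j 0 i = vecf mu x1 0 i - b by rewrite /b; ring.
apply: le_trans (ler_normB _ _) _.
rewrite mxE; have := hx1 i; have := ler_norm B; lra.
Qed.


Lemma fC_k0 (R : realType) p k (C : @codebook R p k) z : k = 0%N -> fC C z = 0.
Proof. by move=> k0; subst k; rewrite /fC big_ord0. Qed.

Lemma sume_cst (R : realType) (M : \bar R) n : (0 <= M)%E ->
  (\sum_(i < n) M = n%:R%:E * M)%E.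
Proof.
move=> M0; elim: n => [|n IH]; first by rewrite big_ord0 mul0e.
rewrite big_ord_recr /= IH -natr1 EFinD ge0_muleDl ?mul1e // lee_fin //.
Qed.

Theorem lemmaA3 (R : realType) (p k : nat) (B alpha cm : R) :
  0 < alpha ->
  exists K : R, 0 < K /\
  forall (d : measure_display) (T : measurableType d) (P : probability T R)
    (mu muhat : 'I_p -> T -> R) (kappa : R) (Cs : @codebook R p k),
    (forall a, measurable_fun setT (mu a)) ->
    (forall a, measurable_fun setT (muhat a)) ->
    {ae P, forall x, forall a, `|mu a x| <= B} ->
    {ae P, forall x, forall a, `|muhat a x| <= B} ->
    0 < kappa ->
    @margin_condition R p k d T P mu kappa alpha cm ->
    optimal P mu Cs ->
    (`| \int[P]_x ((fC Cs (vecf muhat x))%:E - (fC Cs (vecf mu x))%:E) |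
      <= K%:E *
         (\big[maxe/0]_(a < p) L1norm P (fun x => (muhat a x - mu a x)%R)
          + \big[maxe/0]_(a < p)
              poweR (Linfnorm P (fun x => (muhat a x - mu a x)%R)) (alpha + 1)
          + (kappa^-1)%:E *
            \big[maxe/0]_(a < p)
              (Linfnorm P (fun x => (muhat a x - mu a x)%R)
               * L1norm P (fun x => (muhat a x - mu a x)%R))))%E.
Proof.
move=> _.
set Bb := `|B|.
set E0 := p%:R * (Bb + Bb) ^+ 2 + 1.
set Lc := Bb + 1 + E0.
set D := p%:R * (Bb + Lc) ^+ 2.
set L := 2 * Bb + 2 + 2 * D.
have Bb0 : 0 <= Bb by exact: normr_ge0.
have E00 : 0 <= E0 by rewrite /E0 addr_ge0 // mulr_ge0 // sqr_ge0.
have D0 : 0 <= D by rewrite /D mulr_ge0 // sqr_ge0.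
have L0 : 0 <= L by rewrite /L; lra.
exists (L * p%:R + 1); split.
  by have := mulr_ge0 L0 (ler0n _ p); lra.
move=> d T P mu muhat kappa Cs mmu mmuhat hmu hmuhat kappa0 _ opt.
have mf1 := @mfC _ _ _ _ _ muhat Cs mmuhat.
have mf2 := @mfC _ _ _ _ _ mu Cs mmu.
set f1 := fun x => fC Cs (vecf muhat x).
set f2 := fun x => fC Cs (vecf mu x).
have PW : {ae P, forall x, `|f1 x - f2 x| <= L * \sum_(a < p) `|muhat a x - mu a x|}.
  have S0 : forall x, 0 <= L * \sum_(a < p) `|muhat a x - mu a x|.
    by move=> x; rewrite mulr_ge0 // sumr_ge0.
  case: (posnP k) => [k0|kp].
    apply: filterS hmu => x _.
    by rewrite /f1 /f2 !fC_k0 // subr0 normr0.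
  pose j0 := Ordinal kp.
  have [j hj] := @center_bound _ _ _ _ _ P mu Cs j0 B mmu hmu opt.
  have hD : forall z : 'rV[R]_p, (forall i, `|z 0 i| <= Bb) -> fC Cs z <= D.
    move=> z hz; apply: le_trans (fC_le Cs z j) _.
    apply: dist2_box => i; apply: le_trans (ler_normB _ _) _.
    by apply: lerD; [exact: hz|exact: hj].
  apply: filterS2 hmu hmuhat => x h1 h2.
  have b1 : forall i, `|vecf mu x 0 i| <= Bb.
    by move=> i; rewrite mxE; apply: le_trans (h1 i) (ler_norm _).
  have b2 : forall i, `|vecf muhat x 0 i| <= Bb.
    by move=> i; rewrite mxE; apply: le_trans (h2 i) (ler_norm _).
  have e1 := @fC_diff _ _ _ Cs j0 _ _ _ _ b1 b2 (hD _ b1).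
  have e2 := @fC_diff _ _ _ Cs j0 _ _ _ _ b2 b1 (hD _ b2).
  have eS : \sum_(i < p) `|vecf muhat x 0 i - vecf mu x 0 i| = \sum_(a < p) `|muhat a x - mu a x|.
    by apply: eq_bigr => i _; rewrite !mxE.
  have eS' : \sum_(i < p) `|vecf mu x 0 i - vecf muhat x 0 i| = \sum_(a < p) `|muhat a x - mu a x|.
    by rewrite -eS; apply: eq_bigr => i _; rewrite distrC.
  rewrite eS in e1; rewrite eS' in e2.
  rewrite -/L in e1 e2.
  rewrite ler_norml /f1 /f2; apply/andP; split; lra.
set M1 := \big[maxe/0%E]_(a < p) L1norm P (fun x => (muhat a x - mu a x)%R).
set M2 := \big[maxe/0%E]_(a < p) _.
set M3 := \big[maxe/0%E]_(a < p) (_ * _)%E.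
have M10 : (0 <= M1)%E by exact: Order.TotalTheory.bigmax_ge_id.
have M20 : (0 <= M2)%E by exact: Order.TotalTheory.bigmax_ge_id.
have M30 : (0 <= (kappa^-1)%:E * M3)%E.
  by apply: mule_ge0; [rewrite lee_fin invr_ge0 ltW|exact: Order.TotalTheory.bigmax_ge_id].
have mD : forall a, measurable_fun setT (fun x => `|muhat a x - mu a x|).
  by move=> a; apply: measurableT_comp => //; apply: measurable_funB.
under eq_integral => x _ do rewrite -EFinB.
apply: le_trans (le_abse_integral P measurableT _) _.
  by apply/measurable_EFinP; apply: measurable_funB.
rewrite (eq_integral (fun x => (`|fC Cs (vecf muhat x) - fC Cs (vecf mu x)|)%:E)); last first.
  by move=> x _; rewrite abse_EFin.
apply: le_trans (_ : _ <= \int[P]_x (L * \sum_(a < p) `|muhat a x - mu a x|)%:E)%E _.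
  apply: ae_ge0_le_integral => //.
  - apply/measurable_EFinP; apply: measurableT_comp => //; exact: measurable_funB.
  - by move=> x _; rewrite lee_fin mulr_ge0 // sumr_ge0.
  - apply/measurable_EFinP; apply: measurable_funM; first exact: measurable_cst.
    exact: measurable_sum.
  by apply: filterS PW => x hx _; rewrite lee_fin.
under eq_integral => x _ do rewrite EFinM.
rewrite ge0_integralZl_EFin //; last 2 first.
  - by move=> x _; rewrite lee_fin sumr_ge0.
  - by apply/measurable_EFinP; exact: measurable_sum.
under eq_integral => x _ do rewrite -sumEFin.
rewrite ge0_integral_sum //.
have hs : (\sum_(a < p) \int[P]_x `|muhat a x - mu a x|%:E <= p%:R%:E * M1)%E.
  rewrite -sume_cst //; apply: lee_sum => a _.
  exact: (Order.TotalTheory.le_bigmax _ (fun a => L1norm P (fun x => (muhat a x - mu a x)%R)) a).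
apply: le_trans (lee_wpmul2l _ hs) _; first by rewrite lee_fin.
rewrite muleA -EFinM.
apply: le_trans (_ : _ <= (L * p%:R + 1)%:E * M1)%E _.
  by apply: lee_wpmul2r => //; rewrite lee_fin lerDl.
apply: lee_wpmul2l; first by rewrite lee_fin; have := mulr_ge0 L0 (ler0n _ p); lra.
by apply: le_trans (leeDl _ M20) (leeDl _ M30).
by move=> a; apply/measurable_EFinP; exact: mD.
Qed.
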